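(* If $f:R\to S$ is a morphism of real semigroups, then $f$ is also a morphism between the associated real reduced multirings (with $a+b=D^t(a,b)$ and $-g=(-1)g$); hence the assignment sending a real semigroup to its associated real reduced multiring and each morphism to itself is a functor $M:\mathcal{RS}\to\mathcal{MR}_{red}$.
   Context: A ternary semigroup is $(S,\cdot,1,0,-1)$ with: $(S,\cdot,1)$ a commutative semigroup with unity; $x^3=x$; $-1\ne1$, $(-1)(-1)=1$; $x0=0$; $x=(-1)x\Rightarrow x=0$. A real semigroup is a ternary semigroup with a ternary relation $D$, where $a\in D^t(b,c)$ means $a\in D(b,c)$, $-b\in D(-a,c)$, $-c\in D(b,-a)$, satisfying: (RS0) $c\in D(a,b)\iff c\in D(b,a)$; (RS1) $a\in D(a,b)$; (RS2) $a\in D(b,c)\Rightarrow ad\in D(bd,cd)$; (RS3) $a\in D^t(b,c)$, $c\in D^t(d,e)\Rightarrow\exists x\in D^t(b,d)$ with $a\in D^t(x,e)$; (RS4) $e\in D(c^2a,d^2b)\Rightarrow e\in D(a,b)$; (RS5) $ad=bd$, $ae=be$, $c\in D(d,e)\Rightarrow ac=bc$; (RS6) $c\in D(a,b)\Rightarrow c\in D^t(c^2a,c^2b)$; (RS7) $D^t(a,-b)\cap D^t(b,-a)\ne\emptyset\Rightarrow a=b$; (RS8) $a\in D(b,c)\Rightarrow a^2\in D(b^2,c^2)$. A morphism of real semigroups $f$ satisfies $f(ab)=f(a)f(b)$, $f(1)=1$, $f(0)=0$, $f(-1)=-1$ and $a\in D(b,c)\Rightarrow f(a)\in D(f(b),f(c))$;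 $\mathcal{RS}$ is the resulting category. A multiring is a tuple $(R,+,\cdot,-,0,1)$ with $+:R\times R\to\mathcal P(R)\setminus\{\emptyset\}$ satisfying: $z\in x+y\Rightarrow x\in z+(-y)$ and $y\in(-x)+z$; $y\in0+x\iff y=x$; $+$ associative and commutative; $(R,\cdot,1)$ a commutative monoid; $a0=0$; $c\in a+b\Rightarrow cd\in ad+bd$. Real reduced: $1\ne0$, $a^3=a$, $c\in a+ab^2\Rightarrow c=a$, $c,d\in a^2+b^2\Rightarrow c=d$. Multiring morphisms satisfy $c\in a+b\Rightarrow f(c)\in f(a)+f(b)$, $f(-a)=-f(a)$, $f(0)=0$, $f(ab)=f(a)f(b)$, $f(1)=1$; $\mathcal{MR}_{red}$ is the category of real reduced multirings. *)

(* Defs.v *)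
Record RealSemigroup := {
  rs_car :> Type;
  rs_mul : rs_car -> rs_car -> rs_car;
  rs_one : rs_car;
  rs_zero : rs_car;
  rs_neg1 : rs_car;
  (* rs_D a b c  means  a ∈ D(b,c) *)
  rs_D : rs_car -> rs_car -> rs_car -> Prop;
  rs_mulA : forall x y z, rs_mul x (rs_mul y z) = rs_mul (rs_mul x y) z;
  rs_mulC : forall x y, rs_mul x y = rs_mul y x;
  rs_mul1x : forall x, rs_mul rs_one x = x;
  rs_cube : forall x, rs_mul x (rs_mul x x) = x;
  rs_neg1_neq1 : rs_neg1 <> rs_one;
  rs_neg1_sq : rs_mul rs_neg1 rs_neg1 = rs_one;
  rs_mulx0 : forall x, rs_mul x rs_zero = rs_zero;
  rs_negfix : forall x, x = rs_mul rs_neg1 x -> x = rs_zero;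
  (* real semigroup axioms, with D^t inlined:
     a ∈ D^t(b,c) iff a ∈ D(b,c), -b ∈ D(-a,c), -c ∈ D(b,-a) *)
  rs_RS0 : forall a b c, rs_D c a b <-> rs_D c b a;
  rs_RS1 : forall a b, rs_D a a b;
  rs_RS2 : forall a b c d, rs_D a b c ->
      rs_D (rs_mul a d) (rs_mul b d) (rs_mul c d);
  rs_RS3 : forall a b c d e,
      (rs_D a b c /\ rs_D (rs_mul rs_neg1 b) (rs_mul rs_neg1 a) c
                  /\ rs_D (rs_mul rs_neg1 c) b (rs_mul rs_neg1 a)) ->
      (rs_D c d e /\ rs_D (rs_mul rs_neg1 d) (rs_mul rs_neg1 c) e
                  /\ rs_D (rs_mul rs_neg1 e) d (rs_mul rs_neg1 c)) ->
      exists x,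
        (rs_D x b d /\ rs_D (rs_mul rs_neg1 b) (rs_mul rs_neg1 x) d
                    /\ rs_D (rs_mul rs_neg1 d) b (rs_mul rs_neg1 x)) /\
        (rs_D a x e /\ rs_D (rs_mul rs_neg1 x) (rs_mul rs_neg1 a) e
                    /\ rs_D (rs_mul rs_neg1 e) x (rs_mul rs_neg1 a));
  rs_RS4 : forall a b c d e,
      rs_D e (rs_mul (rs_mul c c) a) (rs_mul (rs_mul d d) b) -> rs_D e a b;
  rs_RS5 : forall a b c d e,
      rs_mul a d = rs_mul b d -> rs_mul a e = rs_mul b e -> rs_D c d e ->
      rs_mul a c = rs_mul b c;
  rs_RS6 : forall a b c, rs_D c a b ->
      let a' := rs_mul (rs_mul c c) a in
      let b' := rs_mul (rs_mul c c) b in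
      rs_D c a' b' /\ rs_D (rs_mul rs_neg1 a') (rs_mul rs_neg1 c) b'
                   /\ rs_D (rs_mul rs_neg1 b') a' (rs_mul rs_neg1 c);
  rs_RS7 : forall a b,
      (exists x,
        (rs_D x a (rs_mul rs_neg1 b) /\ rs_D (rs_mul rs_neg1 a) (rs_mul rs_neg1 x) (rs_mul rs_neg1 b)
           /\ rs_D (rs_mul rs_neg1 (rs_mul rs_neg1 b)) a (rs_mul rs_neg1 x)) /\
        (rs_D x b (rs_mul rs_neg1 a) /\ rs_D (rs_mul rs_neg1 b) (rs_mul rs_neg1 x) (rs_mul rs_neg1 a)
           /\ rs_D (rs_mul rs_neg1 (rs_mul rs_neg1 a)) b (rs_mul rs_neg1 x))) ->
      a = b;
  rs_RS8 : forall a b c, rs_D a b c ->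
      rs_D (rs_mul a a) (rs_mul b b) (rs_mul c c)
}.

Arguments rs_mul {_}. Arguments rs_one {_}. Arguments rs_zero {_}.
Arguments rs_neg1 {_}. Arguments rs_D {_}.

Definition rs_neg {R : RealSemigroup} (x : R) : R := rs_mul rs_neg1 x.

Definition rs_Dt {R : RealSemigroup} (a b c : R) : Prop :=
  rs_D a b c /\ rs_D (rs_neg b) (rs_neg a) c /\ rs_D (rs_neg c) b (rs_neg a).

Definition RS_morphism (R S : RealSemigroup) (f : R -> S) : Prop :=
  (forall a b, f (rs_mul a b) = rs_mul (f a) (f b)) /\
  f rs_one = rs_one /\ f rs_zero = rs_zero /\ f rs_neg1 = rs_neg1 /\
  (forall a b c, rs_D a b c -> rs_D (f a) (f b) (f c)).

(** [add a b c] means c ∈ a + b. *)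
Definition is_multiring {T : Type} (add : T -> T -> T -> Prop)
    (mul : T -> T -> T) (neg : T -> T) (zero one : T) : Prop :=
  (forall x y, exists z, add x y z) /\
  (forall x y z, add x y z -> add z (neg y) x /\ add (neg x) z y) /\
  (forall x y, add zero x y <-> y = x) /\
  (forall x y z w,
      (exists t, add x y t /\ add t z w) <-> (exists t, add y z t /\ add x t w)) /\
  (forall x y z, add x y z <-> add y x z) /\
  (forall x y z, mul x (mul y z) = mul (mul x y) z) /\
  (forall x y, mul x y = mul y x) /\
  (forall x, mul one x = x) /\
  (forall a, mul a zero = zero) /\
  (forall a b c d, add a b c -> add (mul a d) (mul b d) (mul c d)).

Definition is_real_reduced_multiring {T : Type} (add : T -> T -> T -> Prop)
    (mul : T -> T -> T) (neg : T -> T) (zero one : T) : Prop :=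
  is_multiring add mul neg zero one /\
  one <> zero /\
  (forall a, mul a (mul a a) = a) /\
  (forall a b c, add a (mul a (mul b b)) c -> c = a) /\
  (forall a b c d, add (mul a a) (mul b b) c -> add (mul a a) (mul b b) d -> c = d).

Definition MR_morphism {T U : Type}
    (addT : T -> T -> T -> Prop) (mulT : T -> T -> T) (negT : T -> T) (zeroT oneT : T)
    (addU : U -> U -> U -> Prop) (mulU : U -> U -> U) (negU : U -> U) (zeroU oneU : U)
    (f : T -> U) : Prop :=
  (forall a b c, addT a b c -> addU (f a) (f b) (f c)) /\
  (forall a, f (negT a) = negU (f a)) /\
  f zeroT = zeroU /\
  (forall a b, f (mulT a b) = mulU (f a) (f b)) /\
  f oneT = oneU.

Definition M_add (R : RealSemigroup) (a b c : R) : Prop := rs_Dt c a b.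

Definition M_is_real_reduced (R : RealSemigroup) : Prop :=
  is_real_reduced_multiring (M_add R) (@rs_mul R) (@rs_neg R) rs_zero rs_one.

Definition M_morphism (R S : RealSemigroup) (f : R -> S) : Prop :=
  MR_morphism (M_add R) (@rs_mul R) (@rs_neg R) rs_zero rs_one
              (M_add S) (@rs_mul S) (@rs_neg S) rs_zero rs_one f.

(* Main.v *)
Require Import Defs.
From Stdlib Require Import Setoid.

Section RS.
Variable R : RealSemigroup.

Local Notation D := (@rs_D R).
Local Notation neg := (@rs_neg R).
Local Notation mul := (@rs_mul R).
Local Notation Dt := (@rs_Dt R).

Lemma mA (x y z : R) : mul x (mul y z) = mul (mul x y) z.
Proof. apply rs_mulA. Qed.
Lemma mC (x y : R) : mul x y = mul y x.
Proof. apply rs_mulC. Qed.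
Lemma m1x (x : R) : mul rs_one x = x.
Proof. apply rs_mul1x. Qed.
Lemma mx0 (x : R) : mul x rs_zero = rs_zero.
Proof. apply rs_mulx0. Qed.
Lemma m0x (x : R) : mul rs_zero x = rs_zero.
Proof. rewrite mC; apply mx0. Qed.

Lemma negneg (x : R) : neg (neg x) = x.
Proof. unfold rs_neg. rewrite mA, rs_neg1_sq. apply m1x. Qed.
Lemma neg0 : neg rs_zero = rs_zero.
Proof. unfold rs_neg. apply mx0. Qed.
Lemma negmul (a d : R) : mul (neg a) d = neg (mul a d).
Proof. unfold rs_neg. rewrite mA. reflexivity. Qed.

Lemma D_sym (a b c : R) : D a b c -> D a c b.
Proof. intro H. apply (proj1 (rs_RS0 R b c a)). exact H. Qed.

Lemma D_neg (a b c : R) : D a b c -> D (neg a) (neg b) (neg c).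
Proof.
  intro H. pose proof (rs_RS2 R a b c rs_neg1 H) as H'.
  unfold rs_neg. rewrite (mC rs_neg1 a), (mC rs_neg1 b), (mC rs_neg1 c). exact H'.
Qed.

Lemma D_mulr (a b c d : R) : D a b c -> D (mul a d) (mul b d) (mul c d).
Proof. apply rs_RS2. Qed.

Lemma D0 (a b : R) : D rs_zero a b.
Proof.
  apply (rs_RS4 R a b rs_zero rs_zero rs_zero).
  rewrite mx0, !m0x. apply rs_RS1.
Qed.

Lemma RS4' (e a b d : R) : D e a (mul b (mul d d)) -> D e a b.
Proof.
  intro H. apply (rs_RS4 R a b rs_one d e).
  rewrite m1x, m1x, (mC (mul d d) b). exact H.
Qed.

Lemma RS3' (a b c d e : R) : Dt a b c -> Dt c d e -> exists x, Dt x b d /\ Dt a x e.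
Proof. intros H1 H2. exact (rs_RS3 R a b c d e H1 H2). Qed.

Lemma RS7' (a b : R) : (exists x, Dt x a (neg b) /\ Dt x b (neg a)) -> a = b.
Proof. intro H. exact (rs_RS7 R a b H). Qed.

Lemma RS6' (a b c : R) : D c a b -> Dt c (mul (mul c c) a) (mul (mul c c) b).
Proof. intro H. exact (rs_RS6 R a b c H). Qed.

Lemma Dt_comm (a b c : R) : Dt a b c -> Dt a c b.
Proof.
  intros [H1 [H2 H3]]. split; [|split]; apply D_sym; assumption.
Qed.

Lemma Dt_move (a b c : R) : Dt a b c -> Dt b a (neg c).
Proof.
  intros [H1 [H2 H3]]. split; [|split].
  - pose proof (D_neg _ _ _ H2) as H. rewrite !negneg in H. exact H.
  - apply D_neg; exact H1.
  - pose proof (D_neg _ _ _ H3) as H. rewrite !negneg in H. rewrite negneg.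
    apply D_sym; exact H.
Qed.

Lemma Dt_mulr (a b c d : R) : Dt c a b -> Dt (mul c d) (mul a d) (mul b d).
Proof.
  intros [H1 [H2 H3]]. split; [|split].
  - apply D_mulr; exact H1.
  - pose proof (D_mulr _ _ _ d H2) as H. rewrite !negmul in H. exact H.
  - pose proof (D_mulr _ _ _ d H3) as H. rewrite !negmul in H. exact H.
Qed.

Lemma DTSS (x s : R) : D x s s -> D (neg s) (neg x) s -> x = s.
Proof.
  intros H1 H2.
  assert (h1 : x = mul (mul s s) x).
  { pose proof (rs_RS5 R rs_one (mul s s) x s s) as E.
    rewrite <- (m1x x) at 1. apply E; try exact H1.
    - rewrite m1x, <- mA. symmetry. apply rs_cube.
    - rewrite m1x, <- mA. symmetry. apply rs_cube. }
  assert (SUP : D x s (neg s)).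
  { pose proof (RS6' s (neg x) s (rs_RS1 R s (neg x))) as [_ [_ H]].
    assert (e1 : mul (mul s s) s = s) by (rewrite <- mA; apply rs_cube).
    assert (e2 : mul (mul s s) (neg x) = neg x).
    { unfold rs_neg. rewrite mA, (mC (mul s s) rs_neg1), <- mA, <- h1. reflexivity. }
    rewrite e1, e2, negneg in H. exact H. }
  apply RS7'. exists s. split; split; [| split | | split].
  - pose proof (D_neg _ _ _ H2) as H. rewrite !negneg in H. exact H.
  - apply D_neg; exact H1.
  - pose proof (D_neg _ _ _ H2) as H. rewrite !negneg in H. rewrite negneg. exact H.
  - apply rs_RS1.
  - apply rs_RS1.
  - rewrite negneg. exact SUP.
Qed.

Lemma R3 (a b c : R) : Dt c a (mul a (mul b b)) -> c = a.
Proof.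
  intros [H1 [H2 _]]. apply DTSS.
  - apply (RS4' _ _ _ b); exact H1.
  - apply (RS4' _ _ _ b); exact H2.
Qed.

Lemma sq_idem (a : R) : mul (mul a a) (mul a a) = mul a a.
Proof. rewrite mA, <- (mA a a a), rs_cube. reflexivity. Qed.

Lemma K (a b d : R) : Dt d (mul a a) (mul b b) -> mul d (mul a a) = mul a a.
Proof.
  intros H. pose proof (Dt_mulr _ _ _ (mul a a) H) as [H1 [H2 _]].
  rewrite sq_idem, (mC (mul b b) (mul a a)) in H1, H2.
  apply DTSS.
  - apply (RS4' _ _ _ b); exact H1.
  - apply (RS4' _ _ _ b); exact H2.
Qed.

Lemma R4 (a b c d : R) :
  Dt c (mul a a) (mul b b) -> Dt d (mul a a) (mul b b) -> c = d.
Proof.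
  intros Hc Hd.
  assert (E : forall u v, Dt u (mul a a) (mul b b) -> Dt v (mul a a) (mul b b) ->
                 u = mul v u).
  { intros u v Hu Hv.
    pose proof (K _ _ _ Hv) as k1.
    pose proof (K _ _ _ (Dt_comm _ _ _ Hv)) as k2.
    pose proof (rs_RS5 R rs_one v u (mul a a) (mul b b)) as E.
    rewrite <- (m1x u) at 1. apply E.
    - rewrite m1x, k1. reflexivity.
    - rewrite m1x, k2. reflexivity.
    - exact (proj1 Hu). }
  rewrite (E c d Hc Hd), mC. symmetry. exact (E d c Hd Hc).
Qed.

Lemma M_rr : M_is_real_reduced R.
Proof.
  unfold M_is_real_reduced, is_real_reduced_multiring, is_multiring, M_add.
  split; [split; [|split; [|split; [|split; [|split; [|split; [|split; [|split; [|split]]]]]]]]|split; [|split; [|split]]].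
  - intros x y.
    assert (A1 : Dt x x rs_zero).
    { split; [|split].
      - apply rs_RS1.
      - apply rs_RS1.
      - rewrite neg0. apply D0. }
    assert (A2 : Dt rs_zero y (neg y)).
    { split; [|split].
      - apply D0.
      - rewrite neg0. apply D_sym, rs_RS1.
      - rewrite negneg, neg0. apply rs_RS1. }
    destruct (RS3' _ _ _ _ _ A1 A2) as [z [Hz _]]. exists z. exact Hz.
  - intros x y z H. split.
    + apply Dt_move; exact H.
    + apply Dt_comm, Dt_move, Dt_comm; exact H.
  - intros x y. split.
    + intros [H1 [H2 H3]]. apply RS7'. exists rs_zero. split; split; [| split | | split].
      * apply D0.
      * pose proof (D_neg _ _ _ H1) as H. exact H.
      * pose proof (D_neg _ _ _ H3) as H. rewrite !negneg, neg0 in H.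
        rewrite negneg, neg0. apply D_sym. exact H.
      * apply D0.
      * rewrite neg0. exact H3.
      * rewrite negneg, neg0. apply D_sym. exact H1.
    + intros ->. split; [|split].
      * apply D_sym, rs_RS1.
      * rewrite neg0. apply D0.
      * apply D_sym, rs_RS1.
  - intros x y z w. split.
    + intros [t [H1 H2]].
      destruct (RS3' _ _ _ _ _ (Dt_comm _ _ _ H2) (Dt_comm _ _ _ H1)) as [s [Hs1 Hs2]].
      exists s. split; apply Dt_comm; assumption.
    + intros [t [H1 H2]].
      destruct (RS3' _ _ _ _ _ H2 H1) as [s [Hs1 Hs2]].
      exists s. split; assumption.
  - intros x y z. split; apply Dt_comm.
  - apply rs_mulA.
  - apply rs_mulC.
  - apply rs_mul1x.
  - apply rs_mulx0.
  - intros a b c d H. apply Dt_mulr; exact H.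
  - intro H. apply (rs_neg1_neq1 R).
    rewrite <- (m1x rs_neg1), mC, H, mx0. reflexivity.
  - apply rs_cube.
  - intros a b c H. exact (R3 _ _ _ H).
  - intros a b c d H1 H2. exact (R4 _ _ _ _ H1 H2).
Qed.

End RS.

Lemma M_morph (R S : RealSemigroup) (f : R -> S) : RS_morphism R S f -> M_morphism R S f.
Proof.
  intros [fm [f1 [f0 [fn fD]]]].
  assert (fneg : forall a, f (rs_neg a) = rs_neg (f a)).
  { intro a. unfold rs_neg. rewrite fm, fn. reflexivity. }
  unfold M_morphism, MR_morphism, M_add.
  split; [|split; [|split; [|split]]].
  - intros a b c [H1 [H2 H3]]. split; [|split].
    + apply fD; exact H1.
    + rewrite <- !fneg. apply fD; exact H2.
    + rewrite <- !fneg. apply fD; exact H3.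
  - exact fneg.
  - exact f0.
  - exact fm.
  - exact f1.
Qed.

Theorem corollary6p8 :
  (* object part: each real semigroup yields a real reduced multiring *)
  (forall R : RealSemigroup, M_is_real_reduced R) /\
  (* morphism part: RS-morphisms are MR-morphisms of the associated multirings *)
  (forall (R S : RealSemigroup) (f : R -> S),
      RS_morphism R S f -> M_morphism R S f).
Proof.
  split.
  - exact M_rr.
  - exact M_morph.
Qed.
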